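(* Let $K$ be an algebraically closed field of characteristic zero, $\deg_1$ the weighted degree on $K[x_1,\dots,x_n]$ assigning positive real weights $w_i$ to $x_i$, $\Phi=(f_1,\dots,f_n)$ a polynomial automorphism of $K^n$ with jacobian $\lambda$, $\Phi^{-1}=(g_1,\dots,g_n)$, $d_i=\deg_1(f_i)$, and $\deg_2$ the weighted degree assigning weight $d_i$ to $x_i$. Let $\delta_i(P)=\lambda^{-1}\frac{\partial P}{\partial x_i}$ and $\Delta_i(P)=\mathrm{j}(g_1,\dots,g_{i-1},P,g_{i+1},\dots,g_n)$. Then there exists an index $i$ such that $\deg_2(\Delta_i)\ge\deg_1(\delta_i)=-w_i$.
   Context: $\mathrm{j}$ denotes the jacobian determinant. For a p.w.h. degree $\deg$ and a $K$-derivation $\partial$ of $K[x_1,\dots,x_n]$, $\deg(\partial)=\sup\{\deg(\partial(P))-\deg(P) : P\ne 0\}$ (equal to $-\infty$ iff $\partial=0$). *)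

(* Defs.v *)
From HB Require Import structures.
From mathcomp Require Import all_boot all_order all_algebra.
From mathcomp Require Import mpoly.
From mathcomp Require Import boolp classical_sets reals constructive_ereal ereal.

Set Implicit Arguments.
Unset Strict Implicit.
Unset Printing Implicit Defensive.

Import Order.TTheory GRing.Theory Num.Theory.
Local Open Scope ring_scope.
Local Open Scope classical_set_scope.

Definition mweight (R : realType) (n : nat) (w : 'I_n -> R) (m : 'X_{1..n}) : R :=
  \sum_(i < n) w i * (m i)%:R.

Definition wdeg (R : realType) (K : fieldType) (n : nat) (w : 'I_n -> R)
    (p : {mpoly K[n]}) : \bar R :=
  \big[Order.max/-oo%E]_(m <- msupp p) (mweight w m)%:E.

Definition deriv_deg (R : realType) (K : fieldType) (n : nat) (w : 'I_n -> R)
    (D : {mpoly K[n]} -> {mpoly K[n]}) : \bar R :=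
  ereal_sup [set (wdeg w (D P) - wdeg w P)%E | P in [set P | P != 0]].

Definition jac (K : fieldType) (n : nat) (F : 'I_n -> {mpoly K[n]}) : {mpoly K[n]} :=
  \det (\matrix_(i < n, j < n) mderiv j (F i)).

Definition delta_op (K : fieldType) (n : nat) (lambda : K) (i : 'I_n)
    (P : {mpoly K[n]}) : {mpoly K[n]} :=
  lambda^-1 *: mderiv i P.

Definition Delta_op (K : fieldType) (n : nat) (g : 'I_n -> {mpoly K[n]}) (i : 'I_n)
    (P : {mpoly K[n]}) : {mpoly K[n]} :=
  jac (fun k => if k == i then P else g k).

(* Main.v *)
Require Import Defs.
From HB Require Import structures.
From mathcomp Require Import all_boot all_order all_algebra.
From mathcomp Require Import mpoly.
From mathcomp Require Import boolp classical_sets reals constructive_ereal ereal.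
Import Order.TTheory GRing.Theory Num.Theory.
Set Implicit Arguments. Unset Strict Implicit. Unset Printing Implicit Defensive.
Local Open Scope ring_scope.
Section BMax.
Variables (R : realType) (T : eqType) (F : T -> R).
Local Notation B s := (\big[Order.max/-oo%E]_(m <- s) (F m)%:E).

Lemma bmax_ub s x : x \in s -> ((F x)%:E <= B s)%E.
Proof.
elim: s => // a s IH; rewrite in_cons big_cons => /orP[/eqP->|/IH h].
  by rewrite le_max lexx.
by rewrite le_max h orbT.
Qed.

Lemma bmax_le s y : (forall x, x \in s -> ((F x)%:E <= y)%E) -> (B s <= y)%E.
Proof.
elim: s => [|a s IH] H; first by rewrite big_nil leNye.
rewrite big_cons ge_max H ?mem_head //= IH // => x xs; apply: H.
by rewrite in_cons xs orbT.
Qed.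

Lemma bmax_att s : s != [::] -> exists2 x, x \in s & B s = (F x)%:E.
Proof.
elim: s => // a s IH _; rewrite big_cons.
case: s IH => [|b s] IH.
  by exists a; rewrite ?mem_head // big_nil; apply/max_idPl; rewrite leNye.
have [x xs ->] := IH isT.
rewrite /Order.max; case: ifP => _.
  by exists x; rewrite // in_cons xs orbT.
by exists a; rewrite ?mem_head.
Qed.
End BMax.
Section WDeg.
Variables (R : realType) (K : fieldType) (n : nat) (w : 'I_n -> R).
Implicit Types (p q : {mpoly K[n]}).

Lemma wdeg_ub [p m] : m \in msupp p -> ((Defs.mweight w m)%:E <= wdeg w p)%E.
Proof. exact: bmax_ub. Qed.

Lemma wdeg_le p y : (forall m, m \in msupp p -> ((Defs.mweight w m)%:E <= y)%E) ->
  (wdeg w p <= y)%E.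
Proof. exact: bmax_le. Qed.

Lemma wdeg_att [p] : p != 0 -> exists2 m, m \in msupp p & wdeg w p = (Defs.mweight w m)%:E.
Proof. by move=> p0; apply: bmax_att; rewrite msupp_eq0. Qed.

Lemma wdeg_supp p q : msupp p =i msupp q -> wdeg w p = wdeg w q.
Proof.
move=> e; apply/le_anti/andP; split; apply: wdeg_le => m mp; apply: wdeg_ub;
  by rewrite ?e // -e.
Qed.

Lemma wdegZ c p : c != 0 -> wdeg w (c *: p) = wdeg w p.
Proof.
move=> c0; apply: wdeg_supp => m.
by rewrite !mcoeff_msupp mcoeffZ mulf_eq0 negb_or c0.
Qed.

Lemma wdeg0 : wdeg w (0 : {mpoly K[n]}) = -oo%E.
Proof.
have /eqP e : msupp (0 : {mpoly K[n]}) == [::] by rewrite msupp_eq0.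
by rewrite /wdeg e big_nil.
Qed.

Lemma wdeg_fin p : (wdeg w p <= (fine (wdeg w p))%:E)%E.
Proof.
have [->|p0] := eqVneq p 0; first by rewrite wdeg0 leNye.
by have [m _ ->] := wdeg_att p0.
Qed.

Lemma mweightD m1 m2 : Defs.mweight w (m1 + m2)%MM = Defs.mweight w m1 + Defs.mweight w m2.
Proof.
rewrite /Defs.mweight -big_split; apply: eq_bigr => i _.
by rewrite mnmDE natrD mulrDr.
Qed.

Lemma mweightU i : Defs.mweight w U_(i)%MM = w i.
Proof.
rewrite /Defs.mweight (bigD1 i) //= big1 ?addr0 => [|j ji].
  by rewrite mnm1E eqxx mulr1.
by rewrite mnm1E eq_sym (negbTE ji) mulr0.
Qed.

Lemma mweight0 : Defs.mweight w 0%MM = 0.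
Proof. by rewrite /Defs.mweight big1 // => i _; rewrite mnm0E mulr0. Qed.

Lemma wdegD p q y : (wdeg w p <= y)%E -> (wdeg w q <= y)%E -> (wdeg w (p + q) <= y)%E.
Proof.
move=> hp hq; apply: wdeg_le => m /msuppD_le; rewrite mem_cat => /orP[] h.
  exact: le_trans (wdeg_ub h) hp.
exact: le_trans (wdeg_ub h) hq.
Qed.

Lemma wdeg_sum (I : Type) (r : seq I) (P : pred I) (F : I -> {mpoly K[n]}) y :
  (forall i, P i -> (wdeg w (F i) <= y)%E) -> (wdeg w (\sum_(i <- r | P i) F i) <= y)%E.
Proof.
move=> H; apply: (big_ind (fun q => (wdeg w q <= y)%E)) => //.
  by rewrite wdeg0 leNye.
by move=> x1 y1 hx hy; apply: wdegD.
Qed.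

Lemma wdegM p q a b : (wdeg w p <= a%:E)%E -> (wdeg w q <= b%:E)%E ->
  (wdeg w (p * q) <= (a + b)%:E)%E.
Proof.
move=> hp hq; apply: wdeg_le => m /msuppM_le /allpairsP[[m1 m2] /= [h1 h2 ->]].
rewrite mweightD lee_fin lerD //.
  by rewrite -lee_fin (le_trans (wdeg_ub h1)).
by rewrite -lee_fin (le_trans (wdeg_ub h2)).
Qed.

Lemma wdeg1 : (wdeg w (1 : {mpoly K[n]}) <= 0%:E)%E.
Proof.
apply: wdeg_le => m; rewrite -mpolyC1 msupp1 inE => /eqP ->.
by rewrite mweight0.
Qed.

Lemma wdeg_prod (I : Type) (r : seq I) (P : pred I) (F : I -> {mpoly K[n]}) (a : I -> R) :
  (forall i, P i -> (wdeg w (F i) <= (a i)%:E)%E) ->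
  (wdeg w (\prod_(i <- r | P i) F i) <= (\sum_(i <- r | P i) a i)%:E)%E.
Proof.
move=> H; apply: (big_ind2 (fun q x => (wdeg w q <= x%:E)%E)) => //.
  exact: wdeg1.
by move=> *; apply: wdegM.
Qed.

Lemma wdegX p k a : (wdeg w p <= a%:E)%E -> (wdeg w (p ^+ k) <= (a *+ k)%:E)%E.
Proof.
move=> h; elim: k => [|k IH]; first by rewrite expr0 mulr0n wdeg1.
by rewrite exprS mulrS; apply: wdegM.
Qed.

Lemma wdegXU k : wdeg w ('X_k : {mpoly K[n]}) = (w k)%:E.
Proof.
apply/le_anti/andP; split.
  by apply: wdeg_le => m; rewrite msuppX inE => /eqP ->; rewrite mweightU.
by rewrite -mweightU; apply: wdeg_ub; rewrite msuppX mem_head.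
Qed.

End WDeg.
Section WDeg2.
Variables (R : realType) (K : fieldType) (n : nat) (w : 'I_n -> R).
Implicit Types (p q : {mpoly K[n]}).

Lemma wdegZ_le c p : (wdeg w (c *: p) <= wdeg w p)%E.
Proof. by apply: wdeg_le => m /msuppZ_le h; apply: wdeg_ub. Qed.

Lemma wdeg_comp (d : 'I_n -> R) (t : n.-tuple {mpoly K[n]}) p :
  (forall j, (wdeg w (tnth t j) <= (d j)%:E)%E) ->
  (wdeg w (p \mPo t) <= wdeg d p)%E.
Proof.
move=> H; rewrite comp_mpolyE big_seq; apply: wdeg_sum => m mp.
apply: le_trans (wdegZ_le _ _) _.
apply: le_trans (wdeg_ub d mp).
rewrite /Defs.mweight.
have -> : \sum_(i < n) d i * (m i)%:R = \sum_(i < n) d i *+ m i.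
  by apply: eq_bigr => i _; rewrite mulr_natr.
by apply: wdeg_prod => i _; apply: wdegX.
Qed.

Lemma wdeg_deriv p i : (wdeg w (mderiv i p) <= wdeg w p - (w i)%:E)%E.
Proof.
apply: wdeg_le => m; rewrite mcoeff_msupp mcoeff_mderiv => h.
have hm : (m + U_(i))%MM \in msupp p.
  by rewrite mcoeff_msupp; apply: contra h => /eqP ->; rewrite mul0rn.
have -> : Defs.mweight w m = Defs.mweight w (m + U_(i))%MM - w i.
  by rewrite mweightD mweightU addrK.
by rewrite EFinB leeB // wdeg_ub.
Qed.
End WDeg2.
Section Alg.
Variables (K : fieldType) (n : nat).
Implicit Types (p q : {mpoly K[n]}) (t : n.-tuple {mpoly K[n]}).

Lemma der_unique t (D1 D2 : {mpoly K[n]} -> {mpoly K[n]}) :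
  (forall p q, D1 (p + q) = D1 p + D1 q) -> (forall p q, D2 (p + q) = D2 p + D2 q) ->
  (forall c p, D1 (c *: p) = c *: D1 p) -> (forall c p, D2 (c *: p) = c *: D2 p) ->
  (forall p q, D1 (p * q) = D1 p * (q \mPo t) + (p \mPo t) * D1 q) ->
  (forall p q, D2 (p * q) = D2 p * (q \mPo t) + (p \mPo t) * D2 q) ->
  (forall i, D1 'X_i = D2 'X_i) -> forall p, D1 p = D2 p.
Proof.
move=> A1 A2 S1 S2 M1 M2 X p.
have P0 : D1 0 = D2 0.
  by rewrite -(scale0r (0 : {mpoly K[n]})) S1 S2 !scale0r.
have Z1 (D : {mpoly K[n]} -> {mpoly K[n]}) :
    (forall p q, D (p * q) = D p * (q \mPo t) + (p \mPo t) * D q) -> D 1 = 0.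
  move=> M; have := M 1 1; rewrite mulr1 comp_mpoly1 mulr1 mul1r => /esym/eqP.
  by rewrite -subr_eq0 addrK => /eqP.
have PM a b : D1 a = D2 a -> D1 b = D2 b -> D1 (a * b) = D2 (a * b).
  by move=> ha hb; rewrite M1 M2 ha hb.
rewrite [p]mpolyE; apply: (big_ind (fun q => D1 q = D2 q)) => //.
  by move=> a b ha hb; rewrite A1 A2 ha hb.
move=> m _; rewrite S1 S2; congr (_ *: _).
rewrite mpolyXE_id; apply: (big_ind (fun q => D1 q = D2 q)) => //.
  by rewrite (Z1 _ M1) (Z1 _ M2).
move=> i _; elim: (m i) => [|k IH]; first by rewrite expr0 (Z1 _ M1) (Z1 _ M2).
by rewrite exprS PM.
Qed.

Lemma mderivXU (i k : 'I_n) : mderiv k ('X_i : {mpoly K[n]}) = (i == k)%:R.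
Proof.
rewrite mderivX mnm1E; case: eqP => [<-|_]; last by rewrite scale0r.
have -> : (U_(i) - U_(i))%MM = 0%MM by apply/mnmP => l; rewrite mnmBE subnn mnm0E.
by rewrite mpolyX0 scale1r.
Qed.

Lemma chain_rule t p (j : 'I_n) :
  mderiv j (p \mPo t) = \sum_(k < n) (mderiv k p \mPo t) * mderiv j (tnth t k).
Proof.
pose D2 p := \sum_(k < n) (mderiv k p \mPo t) * mderiv j (tnth t k).
apply: (@der_unique t (fun p => mderiv j (p \mPo t)) D2) => {p}.
- by move=> p q; rewrite comp_mpolyD mderivD.
- move=> p q; rewrite /D2 -big_split; apply: eq_bigr => k _.
  by rewrite mderivD comp_mpolyD mulrDl.
- by move=> c p; rewrite comp_mpolyZ mderivZ.
- move=> c p; rewrite /D2 scaler_sumr; apply: eq_bigr => k _.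
  by rewrite mderivZ comp_mpolyZ scalerAl.
- by move=> p q; rewrite rmorphM mderivM.
- move=> p q; rewrite /D2 mulr_suml mulr_sumr -big_split; apply: eq_bigr => k _.
  rewrite mderivM rmorphD !rmorphM mulrDl; congr (_ + _).
    by rewrite mulrAC.
  by rewrite mulrA.
- move=> i; rewrite /D2 comp_mpolyXU -tnth_nth (bigD1 i) //= big1 ?addr0.
    by rewrite mderivXU eqxx rmorph1 mul1r.
  by move=> k ki; rewrite mderivXU eq_sym (negbTE ki) rmorph0 mul0r.
Qed.

Lemma comp_assoc p t (s : n.-tuple {mpoly K[n]}) :
  (p \mPo t) \mPo s = p \mPo [tuple tnth t i \mPo s | i < n].
Proof.
rewrite [p \mPo t]comp_mpolyE raddf_sum [RHS]comp_mpolyE; apply: eq_bigr => m _.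
rewrite /= comp_mpolyZ rmorph_prod; congr (_ *: _); apply: eq_bigr => i _.
by rewrite rmorphXn tnth_mktuple.
Qed.

Definition Jm (F : 'I_n -> {mpoly K[n]}) : 'M[{mpoly K[n]}]_n :=
  \matrix_(i < n, j < n) mderiv j (F i).

Lemma Jm_comp (F : 'I_n -> {mpoly K[n]}) t :
  Jm (fun k => F k \mPo t) = map_mx (comp_mpoly t) (Jm F) *m Jm (tnth t).
Proof.
apply/matrixP => i j; rewrite !mxE chain_rule; apply: eq_bigr => k _.
by rewrite !mxE.
Qed.

Lemma Jm_X : Jm (fun k => 'X_k) = 1%:M.
Proof. by apply/matrixP => i j; rewrite !mxE mderivXU. Qed.

End Alg.
Section Jac.
Variables (K : fieldType) (n : nat).

Lemma inv_jac (f g : 'I_n -> {mpoly K[n]}) (lambda : K) :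
  (forall k, f k \mPo [tuple g j | j < n] = 'X_k) -> jac f = lambda%:MP ->
  lambda != 0 /\
  forall i k, Delta_op g i 'X_k = lambda^-1 *: (mderiv i (f k) \mPo [tuple g j | j < n]).
Proof.
move=> hf hj; set t := [tuple g j | j < n].
set M := map_mx (comp_mpoly t) (Jm f).
have Jt : Jm (tnth t) = Jm g by apply/matrixP => a b; rewrite !mxE tnth_mktuple.
have E : M *m Jm g = 1%:M.
  rewrite -Jm_X -Jt -Jm_comp; apply/matrixP => a b; rewrite !mxE hf.
  by [].
have Hd : lambda%:MP * jac g = 1.
  have := congr1 determinant E; rewrite det_mulmx det_map_mx det1.
  have -> : \det (Jm f) = lambda%:MP by exact: hj.
  by rewrite /= comp_mpolyC.
have l0 : lambda != 0.
  apply: contra_eq_neq Hd => ->; rewrite mpolyC0 mul0r eq_sym.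
  exact: oner_neq0.
have Hg : jac g = lambda^-1%:MP.
  rewrite -[jac g]mul1r -mpolyC1 -(mulVf l0) mpolyCM -mulrA Hd mulr1 //.
split=> // i k.
rewrite /Delta_op /jac (expand_det_row _ i) (bigD1 k) //= big1 ?addr0; last first.
  by move=> j jk; rewrite !mxE eqxx mderivXU eq_sym (negbTE jk) mul0r.
rewrite !mxE eqxx mderivXU eqxx mul1r.
have -> : cofactor (\matrix_(i0, j) mderiv j (if i0 == i then 'X_k else g i0)) i k
    = cofactor (Jm g) i k.
  rewrite /cofactor; congr (_ * \det _); apply/matrixP => a b; rewrite !mxE.
  by rewrite eq_sym (negbTE (neq_lift _ _)).
have E' : Jm g *m M = 1%:M := mulmx1C E.
have A : \adj (Jm g) = jac g *: M.
  rewrite -[\adj _]mulmx1 -E' mulmxA mul_adj_mx mul_scalar_mx //.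
have := congr1 (fun A : 'M_n => A k i) A; rewrite !mxE => ->.
by rewrite Hg mul_mpolyC.
Qed.
End Jac.
Section Final.
Variables (R : realType) (K : fieldType) (n : nat) (w : 'I_n -> R).

Lemma wdeg1E : wdeg w (1 : {mpoly K[n]}) = 0%:E.
Proof.
apply/le_anti; rewrite wdeg1 /= -(mweight0 w); apply: wdeg_ub.
by rewrite -mpolyC1 msupp1 mem_head.
Qed.

Lemma X_neq0 (k : 'I_n) : ('X_k : {mpoly K[n]}) != 0.
Proof. by rewrite -msupp_eq0 msuppX. Qed.

Lemma delta_deg (lambda : K) (i : 'I_n) : lambda != 0 ->
  deriv_deg w (delta_op lambda i) = (- w i)%:E.
Proof.
move=> l0; have li : lambda^-1 != 0 by rewrite invr_eq0.
apply/le_anti/andP; split.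
  apply: ge_ereal_sup => _ [P /= P0 <-].
  rewrite /delta_op wdegZ //.
  have [m _ e] := wdeg_att w P0.
  have h := wdeg_deriv w P i; rewrite e -EFinB in h; rewrite e.
  apply: le_trans (leeB h (lexx _)) _.
  by rewrite -EFinB lee_fin addrAC subrr add0r.
apply: ereal_sup_ubound; exists 'X_i; first exact: X_neq0.
rewrite /delta_op mderivXU eqxx wdegZ // wdeg1E wdegXU.
by rewrite -EFinB sub0r.
Qed.
End Final.
Lemma exists_pos (n : nat) (m : 'X_{1..n}) : m != 0%MM -> exists i, (0 < m i)%N.
Proof.
move=> m0; case: (pickP (fun j => m j != 0%N)) => [j hj|H].
  by exists j; rewrite lt0n.
by case/eqP: m0; apply/mnmP => j; move: (H j) => /negbFE/eqP ->; rewrite mnm0E.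
Qed.

Lemma mweight_pos (R : realType) (n : nat) (w : 'I_n -> R) (m : 'X_{1..n}) :
  (forall i, 0 < w i) -> m != 0%MM -> 0 < Defs.mweight w m.
Proof.
move=> wp m0; have [j hj] := exists_pos m0.
rewrite /Defs.mweight (bigD1 j) //=.
apply: (lt_le_trans (_ : 0 < w j * (m j)%:R)).
  by rewrite mulr_gt0 ?ltr0n.
rewrite lerDl sumr_ge0 // => l _; rewrite mulr_ge0 ?ler0n //.
exact: ltW.
Qed.

Theorem lemma5 (K : closedFieldType) (R : realType) (n : nat)
  (w : 'I_n -> R) (f g : 'I_n -> {mpoly K[n]}) (lambda : K) :
  [pchar K] =i pred0 ->
  (0 < n)%N ->
  (forall i, 0 < w i) ->
  (* Phi = (f_1,...,f_n) is a polynomial automorphism with inverse (g_1,...,g_n) *)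
  (forall k, f k \mPo [tuple g j | j < n] = 'X_k) ->
  (forall k, g k \mPo [tuple f j | j < n] = 'X_k) ->
  (* the jacobian of Phi is lambda *)
  jac f = lambda%:MP ->
  let d := fun i => fine (wdeg w (f i)) in
  exists i : 'I_n,
    (deriv_deg w (delta_op lambda i) <= deriv_deg d (Delta_op g i))%E /\
    deriv_deg w (delta_op lambda i) = (- w i)%:E.
Proof.
move=> Hc n0 wp hf hg hj d.
have [l0 HD] := inv_jac hf hj.
pose k := Ordinal n0.
set t := [tuple g j | j < n]; set F := [tuple f j | j < n].
have [m0 m0s m0n] : exists2 m0, m0 \in msupp (f k) & m0 != 0%MM.
  case: (boolP (has (fun m0 => m0 != 0%MM) (msupp (f k)))) => [/hasP[m0 m0s m0n]|/hasPn H].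
    by exists m0.
  have fc : f k = ((f k)@_(0%MM))%:MP.
    apply/mpolyP => m; rewrite mcoeffC; case: eqP => [->|/eqP mn0].
      by rewrite mulr1.
    rewrite mulr0; apply/eqP; rewrite mcoeff_eq0; apply/negP => /H.
    by rewrite mn0.
  have := hf k; rewrite fc comp_mpolyC => /(congr1 (mcoeff U_(k))).
  by rewrite mcoeffC mcoeffXU eqxx mnm1_eq0 mulr0 => /eqP; rewrite eq_sym oner_eq0.
have fk0 : f k != 0.
  apply: contraTneq m0s => ->.
  by have /eqP -> : msupp (0 : {mpoly K[n]}) == [::] by rewrite msupp_eq0.
have [m ms em] := wdeg_att w fk0.
have mn0 : m != 0%MM.
  apply/eqP => e; have := wdeg_ub w m0s; rewrite em e mweight0 lee_fin.
  by rewrite leNgt mweight_pos.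
have [i hi] := exists_pos mn0.
exists i; split; last exact: delta_deg.
rewrite delta_deg //.
apply: (@le_trans _ _ (wdeg d (Delta_op g i 'X_k) - wdeg d 'X_k)%E); last first.
  by apply: ereal_sup_ubound; exists 'X_k; first exact: X_neq0.
set m' := (m - U_(i))%MM.
have em' : (m' + U_(i))%MM = m.
  apply/mnmP => l; rewrite mnmDE mnmBE mnm1E; case: eqP => [<-|_].
    by rewrite subnK.
  by rewrite subn0 addn0.
have m's : m' \in msupp (mderiv i (f k)).
  rewrite mcoeff_msupp mcoeff_mderiv em' -mulr_natr mulf_neq0 //.
    by rewrite -mcoeff_msupp.
  by have := (pcharf0P K).1 Hc (m' i).+1; rewrite /= => ->.
have h1 := wdeg_ub w m's.
have h2 : (wdeg w (mderiv i (f k)) <= wdeg d (Delta_op g i 'X_k))%E.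
  rewrite HD wdegZ ?invr_eq0 //.
  have E : (mderiv i (f k) \mPo t) \mPo F = mderiv i (f k).
    rewrite comp_assoc.
    have -> : [tuple tnth t j \mPo F | j < n] = [tuple 'X_j | j < n].
      by apply: eq_from_tnth => j; rewrite !tnth_mktuple hg.
    exact: comp_mpoly_id.
  rewrite -{1}E; apply: wdeg_comp => j; rewrite tnth_mktuple; exact: wdeg_fin.
rewrite wdegXU /d em /=.
have e3 : ((- w i)%:E = (Defs.mweight w m - w i)%:E - (Defs.mweight w m)%:E)%E.
  by rewrite -EFinB addrAC subrr add0r.
rewrite e3; apply: leeB (lexx _).
apply: le_trans h2; apply: le_trans h1.
by rewrite -em' mweightD mweightU addrK.
Qed.
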